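(* Let $P$ be a 6-stack and let $Q\subseteq P$ be a subset which, with the induced order, is isomorphic to a tower of sections. If $j\ge 0$ is an integer with $\#Q(j)=3$, where $Q(j)$ denotes the set of elements of rank $j$ in the poset $Q$, then $Q(j)=P(i)$ for some integer $i\ge 0$.
   Context: All posets are finite. For a poset $P$ and $p\in P$, the rank $r(p)$ of $p$ is the largest $m$ such that there is a chain $p_0<\dots<p_m=p$ in $P$. $P$ is ranked of rank $r(P)$ if every maximal chain has exactly $r(P)+1$ elements. For $0\le i\le j$, $P(i,j)=\{p\in P:i\le r(p)\le j\}$, $P(i)=P(i,i)$ (induced order). The 6-crown $C_6$ is the poset on $\{x_0,x_1,x_2,y_0,y_1,y_2\}$ whose only strict comparabilities are $x_0<y_0>x_1<y_1>x_2<y_2>x_0$. A 6-stack is a ranked poset $P$ of rank $n\ge1$ such that $P(i,i+1)\cong C_6$ for each $0\le i<n$. The ordinal sum of posets $P_1,\dots,P_k$ ($k\ge1$) is their disjoint union ordered by the orders of the $P_i$ together with $p<q$ whenever $p\in P_i,q\in P_j,i<j$. A section is either a two-element antichain or a poset on the set $\{[i,k]: 0\le i\le 2,\ 0\le k\le n\}$ (with $3(n+1)$ distinct elements), for some $n\ge 1$, such that: (1) $[i,k]<[i,l]$ whenever $0\le k<l\le n$; (2) for each $k$, $\{[0,k],[1,k],[2,k]\}$ is an antichain; (3) $[i,k]<[j,l]$ implies $[i+1,k]<[j+1,l]$ (first indices mod $3$); (4) for each $0\le k<n$ there are $i,j$ with $[i,k]\not<[j,k+1]$. A tower of sections is an ordinal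 sum of one or more sections. *)

(* Defs.v *)
From mathcomp Require Import all_boot.
Set Implicit Arguments. Unset Strict Implicit. Unset Printing Implicit Defensive.

(* A finite poset is modelled as a finType T with a strict order lt : rel T
   (irreflexive and transitive).  Subsets carry the induced order. *)

Section Posets.
Variable T : finType.
Variable lt : rel T.

Definition strict_order : Prop := irreflexive lt /\ transitive lt.

Definition chainb (S : {set T}) (m : nat) (p : T) : bool :=
  [exists s : (m.+1).-tuple T,
     [&& all (fun x => x \in S) s, sorted lt s & tnth s ord_max == p]].

(* For a strict order a chain has at
   most #|T| elements, so taking the maximum over m <= #|T| is harmless. *)
Definition rank_in (S : {set T}) (p : T) : nat :=
  \max_(m < #|T|.+1 | chainb S m p) m.

Definition level (S : {set T}) (j : nat) : {set T} :=
  [set x in S | rank_in S x == j].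

Definition levels (S : {set T}) (i j : nat) : {set T} :=
  [set x in S | (i <= rank_in S x <= j)].

Definition is_chain (S C : {set T}) : bool :=
  (C \subset S) && [forall x in C, forall y in C, (x == y) || lt x y || lt y x].

Definition maximal_chain (S C : {set T}) : bool :=
  is_chain S C && [forall x in S, (x \notin C) ==> ~~ is_chain S (x |: C)].

Definition ranked_of_rank (S : {set T}) (n : nat) : Prop :=
  forall C : {set T}, maximal_chain S C -> #|C| = n.+1.

(* The 6-crown on 'I_6: x_k = k, y_k = 3 + k (k = 0,1,2);
   x0<y0>x1<y1>x2<y2>x0. *)
Definition c6lt (a b : 'I_6) : bool :=
  ((val a, val b) \in [:: (0,3); (1,3); (1,4); (2,4); (2,5); (0,5)]).

Definition iso_C6 (B : {set T}) : Prop :=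
  exists f : 'I_6 -> T, [/\ injective f, B = [set f a | a in 'I_6] &
    forall a b, lt (f a) (f b) = c6lt a b].

Definition six_stack (S : {set T}) : Prop :=
  exists n, [/\ 1 <= n, ranked_of_rank S n &
    forall i, i < n -> iso_C6 (levels S i i.+1)].

Definition antichain (B : {set T}) : bool :=
  [forall x in B, forall y in B, ~~ lt x y].

Definition is_section (B : {set T}) : Prop :=
  (#|B| = 2 /\ antichain B) \/
  exists n, exists f : 'I_3 * 'I_n.+1 -> T,
    [/\ 1 <= n, injective f & B = [set f x | x in predT]] /\
    [/\ (forall (i : 'I_3) (k l : 'I_n.+1), k < l -> lt (f (i, k)) (f (i, l))),
         (forall (i j : 'I_3) (k : 'I_n.+1), ~~ lt (f (i, k)) (f (j, k))),
     (forall (i j : 'I_3) (k l : 'I_n.+1),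
                  lt (f (i, k)) (f (j, l)) -> lt (f (ordS i, k)) (f (ordS j, l))) &
     (forall k, k < n -> exists i j : 'I_3,
                  ~~ lt (f (i, inord k)) (f (j, inord k.+1)))].

(* (Q, induced order) is isomorphic to an ordinal sum of K >= 1 sections:
   Q is split into blocks b^-1(0), ..., b^-1(K-1), each a section, and
   elements of different blocks are ordered exactly by block index. *)
Definition tower_of_sections (Q : {set T}) : Prop :=
  exists (K : nat) (b : T -> nat),
    [/\ 1 <= K,
        forall x, x \in Q -> b x < K,
        forall i, i < K -> is_section [set x in Q | b x == i] &
        forall x y, x \in Q -> y \in Q -> b x != b y -> lt x y = (b x < b y)].

End Posets.

(* Main.v *)
Require Import Defs.
From mathcomp Require Import all_boot zify.
Set Implicit Arguments. Unset Strict Implicit. Unset Printing Implicit Defensive.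

Lemma chainbP (T : finType) (lt : rel T) (S : {set T}) m p :
  chainb lt S m p <-> exists s : seq T,
    [/\ size s = m, all (fun x => x \in S) (rcons s p) & sorted lt (rcons s p)].
Proof.
split.
- case/existsP=> t /and3P[]; rewrite (tnth_nth p).
  case: t => /= r; case/lastP: r => [//|s x].
  rewrite size_rcons eqSS => /eqP Hsz Ha Hs.
  rewrite nth_rcons Hsz ltnn eqxx => /eqP Hx; subst x.
  by exists s.
- case=> s [Hsz Ha Hs].
  have Hsz' : size (rcons s p) == m.+1 by rewrite size_rcons Hsz.
  apply/existsP; exists (Tuple Hsz'); apply/and3P; split => //.
  by rewrite (tnth_nth p) /= nth_rcons Hsz ltnn eqxx.
Qed.

Lemma chain_bound (T : finType) (lt : rel T) (S : {set T}) m p :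
  strict_order lt -> chainb lt S m p -> m < #|T|.+1.
Proof.
move=> [Hirr Htr] /chainbP [s [Hsz _ Hs]].
have Hu := sorted_uniq Htr Hirr Hs.
have := max_card (mem (rcons s p)).
by rewrite (card_uniqP Hu) size_rcons Hsz ltnS; apply: ltnW.
Qed.

Lemma rank_ge (T : finType) (lt : rel T) (S : {set T}) m p :
  strict_order lt -> chainb lt S m p -> m <= rank_in lt S p.
Proof.
move=> Hso Hc.
exact: (@leq_bigmax_cond _ (fun i : 'I_#|T|.+1 => chainb lt S i p)
          (fun i : 'I_#|T|.+1 => nat_of_ord i) (Ordinal (chain_bound Hso Hc)) Hc).
Qed.

Lemma chain0 (T : finType) (lt : rel T) (S : {set T}) p :
  p \in S -> chainb lt S 0 p.
Proof. by move=> Hp; apply/chainbP; exists [::]; rewrite /= Hp. Qed.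

Lemma rank_chain (T : finType) (lt : rel T) (S : {set T}) p :
  p \in S -> chainb lt S (rank_in lt S p) p.
Proof.
move=> Hp; rewrite /rank_in (bigmax_eq_arg ord0) ?chain0 //.
by case: arg_maxnP; rewrite ?chain0.
Qed.

Lemma rank_lt (T : finType) (lt : rel T) (S : {set T}) u v :
  strict_order lt -> u \in S -> v \in S -> lt u v ->
  rank_in lt S u < rank_in lt S v.
Proof.
move=> Hso Hu Hv Huv; apply: rank_ge => //.
have /chainbP [s [Hsz Ha Hs]] := rank_chain lt Hu.
apply/chainbP; exists (rcons s u); split.
- by rewrite size_rcons Hsz.
- by rewrite all_rcons Hv Ha.
- by rewrite -cats1 cat_rcons sorted_cat_cons Hs /= Huv.
Qed.

Lemma sorted_total (T : finType) (lt : rel T) (s : seq T) x y :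
  transitive lt -> sorted lt s -> x \in s -> y \in s ->
  (x == y) || lt x y || lt y x.
Proof.
move=> Htr Hs Hx Hy.
have Hi : index x s < size s by rewrite index_mem.
have Hj : index y s < size s by rewrite index_mem.
have Hn := sorted_ltn_nth Htr x Hs.
case: (ltngtP (index x s) (index y s)) => H.
- by move: (Hn _ _ Hi Hj H); rewrite !nth_index // => ->; rewrite orbT.
- by move: (Hn _ _ Hj Hi H); rewrite !nth_index // => ->; rewrite !orbT.
- by have := congr1 (nth x s) H; rewrite !nth_index // => ->; rewrite eqxx.
Qed.

Lemma rank_le_n (T : finType) (lt : rel T) (n : nat) p :
  strict_order lt -> ranked_of_rank lt [set: T] n ->
  rank_in lt [set: T] p <= n.
Proof.
move=> [Hirr Htr] Hrk.
have /chainbP [s [Hsz _ Hs]] := rank_chain lt (in_setT p).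
set C0 := [set x in rcons s p].
have HC0 : is_chain lt [set: T] C0.
  apply/andP; split; first exact: subsetT.
  apply/forall_inP => x; rewrite inE => Hx; apply/forall_inP => y; rewrite inE => Hy.
  exact: sorted_total Htr Hs Hx Hy.
have [A /maxsetP [HA Hmax] HsubA] := maxset_exists (P := is_chain lt [set: T]) HC0.
have HmA : maximal_chain lt [set: T] A.
  apply/andP; split => //; apply/forall_inP => x _; apply/implyP => HxA.
  apply/negP => Hc.
  have := Hmax _ Hc (subsetUr _ _) => Heq.
  by move: HxA; rewrite -Heq setU11.
have := Hrk _ HmA => HcA.
have := subset_leq_card HsubA.
have Hu := sorted_uniq Htr Hirr Hs.
rewrite HcA /C0 cardsE (card_uniqP Hu) size_rcons Hsz.
by rewrite ltnS.
Qed.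

Lemma crown_rank (T : finType) (lt : rel T) i (f : 'I_6 -> T) :
  strict_order lt -> 
  levels lt [set: T] i i.+1 = [set f a | a in 'I_6] ->
  (forall a b, lt (f a) (f b) = c6lt a b) ->
  forall a, rank_in lt [set: T] (f a) = i + (3 <= a).
Proof.
move=> Hso HB Hf.
have Hlev a : i <= rank_in lt [set: T] (f a) <= i.+1.
  have : f a \in levels lt [set: T] i i.+1 by rewrite HB imset_f.
  by rewrite inE => /andP[].
have Hlt a b : c6lt a b -> rank_in lt [set: T] (f a) < rank_in lt [set: T] (f b).
  by move=> H; apply: rank_lt; rewrite ?inE ?Hf.
case=> [[|[|[|[|[|[|k]]]]]] Ha] //.
- have := Hlev (Ordinal Ha); have := Hlev (@Ordinal 6 3 isT).
  have := Hlt (Ordinal Ha) (@Ordinal 6 3 isT) isT; simpl; lia.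
- have := Hlev (Ordinal Ha); have := Hlev (@Ordinal 6 3 isT).
  have := Hlt (Ordinal Ha) (@Ordinal 6 3 isT) isT; simpl; lia.
- have := Hlev (Ordinal Ha); have := Hlev (@Ordinal 6 4 isT).
  have := Hlt (Ordinal Ha) (@Ordinal 6 4 isT) isT; simpl; lia.
- have := Hlev (Ordinal Ha); have := Hlev (@Ordinal 6 0 isT).
  have := Hlt (@Ordinal 6 0 isT) (Ordinal Ha) isT; simpl; lia.
- have := Hlev (Ordinal Ha); have := Hlev (@Ordinal 6 1 isT).
  have := Hlt (@Ordinal 6 1 isT) (Ordinal Ha) isT; simpl; lia.
- have := Hlev (Ordinal Ha); have := Hlev (@Ordinal 6 0 isT).
  have := Hlt (@Ordinal 6 0 isT) (Ordinal Ha) isT; simpl; lia.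
Qed.

Lemma crown_level (T : finType) (lt : rel T) i (f : 'I_6 -> T) :
  strict_order lt -> 
  levels lt [set: T] i i.+1 = [set f a | a in 'I_6] ->
  (forall a b, lt (f a) (f b) = c6lt a b) ->
  level lt [set: T] i = [set f a | a in [set a : 'I_6 | a < 3]] /\
  level lt [set: T] i.+1 = [set f a | a in [set a : 'I_6 | 3 <= a]].
Proof.
move=> Hso HB Hf.
have Hr := crown_rank Hso HB Hf.
split; apply/setP => x; apply/idP/idP.
- rewrite inE => /andP[_ /eqP Hx].
  have : x \in levels lt [set: T] i i.+1 by rewrite inE Hx in_setT /=; lia.
  rewrite HB => /imsetP[a _ Ex]; rewrite Ex; apply: imset_f.
  by move: Hx; rewrite Ex Hr inE; case: (ltnP 2 a) => H /=; rewrite ?addn0 ?addn1; lia.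
- case/imsetP=> a; rewrite inE => Ha ->.
  rewrite inE Hr in_setT; case: (ltnP 2 a) Ha => /= H1 H2; rewrite ?addn0 ?addn1 ?eqxx //; lia.
- rewrite inE => /andP[_ /eqP Hx].
  have : x \in levels lt [set: T] i i.+1 by rewrite inE Hx in_setT /=; apply/andP; split; [exact: leqnSn | exact: leqnn].
  rewrite HB => /imsetP[a _ Ex]; rewrite Ex; apply: imset_f.
  by move: Hx; rewrite Ex Hr inE; case: (ltnP 2 a) => H /=; rewrite ?addn0 ?addn1; lia.
- case/imsetP=> a; rewrite inE => Ha ->.
  by rewrite inE Hr in_setT Ha addn1 /=.
Qed.

Lemma card6 (P : pred 'I_6) : #|P| = count P (enum 'I_6).
Proof. by rewrite enumT cardE /enum_mem size_filter. Qed.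
Lemma card_hi : #|[set a : 'I_6 | 3 <= a]| = 3.
Proof. rewrite cardsE card6 !enum_ordSl enum_ord0 /=. reflexivity. Qed.
Lemma card_lo : #|[set a : 'I_6 | a < 3]| = 3.
Proof. rewrite cardsE card6 !enum_ordSl enum_ord0 /=. reflexivity. Qed.
Lemma card_up : forall a : 'I_6, (a < 3) -> (#|[set c | c6lt a c]| = 2).
Proof. move=> a; rewrite cardsE card6 !enum_ordSl enum_ord0 /=. case: a => [[|[|[|[|[|[|]]]]]] ?] //= _; reflexivity. Qed.
Lemma card_down : forall a : 'I_6, (3 <= a) -> (#|[set c | c6lt c a]| = 2).
Proof. move=> a; rewrite cardsE card6 !enum_ordSl enum_ord0 /=. case: a => [[|[|[|[|[|[|]]]]]] ?] //= _; reflexivity. Qed.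
Lemma c6_anti : forall x y z : 'I_6, 
  [&& x != y, y != z, x != z, ~~ c6lt x y, ~~ c6lt y x, ~~ c6lt x z, ~~ c6lt z x, ~~ c6lt y z & ~~ c6lt z y] ->
  ([&& x < 3, y < 3 & z < 3] || [&& 3 <= x, 3 <= y & 3 <= z]).
Proof. move=> [[|[|[|[|[|[|]]]]]] ?] // [[|[|[|[|[|[|]]]]]] ?] // [[|[|[|[|[|[|]]]]]] ?] //. Qed.
Lemma c6_dir : forall x y : 'I_6, c6lt x y -> (x < 3) && (3 <= y).
Proof. move=> [[|[|[|[|[|[|]]]]]] ?] // [[|[|[|[|[|[|]]]]]] ?] //. Qed.

Lemma two_step (T : finType) (lt : rel T) i (f g : 'I_6 -> T) u v :
  strict_order lt ->
  injective f -> levels lt [set: T] i i.+1 = [set f a | a in 'I_6] ->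
  (forall a b, lt (f a) (f b) = c6lt a b) ->
  injective g -> levels lt [set: T] i.+1 i.+2 = [set g a | a in 'I_6] ->
  (forall a b, lt (g a) (g b) = c6lt a b) ->
  rank_in lt [set: T] u = i -> rank_in lt [set: T] v = i.+2 -> lt u v.
Proof.
move=> Hso injf HBf Hf injg HBg Hg Hu Hv.
have [L0 L1] := crown_level Hso HBf Hf.
have [M1 M2] := crown_level Hso HBg Hg.
have : u \in level lt [set: T] i by rewrite inE Hu in_setT eqxx.
rewrite L0 => /imsetP[a]; rewrite inE => Ha Eu.
have : v \in level lt [set: T] i.+2 by rewrite inE Hv in_setT eqxx.
rewrite M2 => /imsetP[b]; rewrite inE => Hb Ev.
set U := [set f c | c in [set c | c6lt a c]].
set D := [set g c | c in [set c | c6lt c b]].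
have HU : U \subset level lt [set: T] i.+1.
  apply/subsetP => w /imsetP[c]; rewrite inE => Hc ->.
  by rewrite L1 imset_f // inE; case/andP: (c6_dir Hc).
have HD : D \subset level lt [set: T] i.+1.
  apply/subsetP => w /imsetP[c]; rewrite inE => Hc ->.
  by rewrite M1 imset_f // inE; case/andP: (c6_dir Hc).
have cU : #|U| = 2 by rewrite card_imset // card_up.
have cD : #|D| = 2 by rewrite card_imset // card_down.
have cL : #|level lt [set: T] i.+1| <= 3.
  by rewrite L1; apply: leq_trans (leq_imset_card _ _) _; rewrite card_hi.
have cUD : #|U :|: D| <= 3.
  apply: leq_trans cL; apply: subset_leq_card; by rewrite subUset HU HD.
have : 0 < #|U :&: D|.
  move: cUD; rewrite cardsU cU cD; lia.
rewrite card_gt0 => /set0Pn[w]; rewrite inE => /andP[].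
case/imsetP=> c; rewrite inE => Hc ->.
case/imsetP=> d; rewrite inE => Hd Ed.
case: Hso => _ Htr.
apply: (Htr (f c)); first by rewrite Eu Hf.
by rewrite Ed Ev Hg.
Qed.

Lemma far (T : finType) (lt : rel T) n :
  strict_order lt -> ranked_of_rank lt [set: T] n ->
  (forall i, i < n -> iso_C6 lt (levels lt [set: T] i i.+1)) ->
  forall k u v, rank_in lt [set: T] v = rank_in lt [set: T] u + 2 + k -> lt u v.
Proof.
move=> Hso Hrk Hc; elim=> [|k IH] u v Hv.
- have Hn := rank_le_n v Hso Hrk.
  have [f [injf HBf Hf]] := Hc (rank_in lt [set: T] u) ltac:(lia).
  have [g [injg HBg Hg]] := Hc (rank_in lt [set: T] u).+1 ltac:(lia).
  apply: (two_step Hso injf HBf Hf injg HBg Hg) => //; lia.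
- have Hn := rank_le_n v Hso Hrk.
  set r := rank_in lt [set: T] v in Hv Hn.
  have [f [injf HBf Hf]] := Hc r.-1 ltac:(lia).
  have [_ L1] := crown_level Hso HBf Hf.
  have : v \in level lt [set: T] r.-1.+1.
    by rewrite inE in_setT /= prednK /r ?eqxx //; lia.
  rewrite L1 => /imsetP[b]; rewrite inE => Hb Ev.
  have : 0 < #|[set c | c6lt c b]| by rewrite card_down.
  rewrite card_gt0 => /set0Pn[c]; rewrite inE => Hcb.
  have Hr := crown_rank Hso HBf Hf c.
  case/andP: (c6_dir Hcb) => Hc3 _.
  case: Hso => Hirr Htr.
  apply: (Htr (f c)); last by rewrite Ev Hf.
  apply: IH; rewrite Hr; move: Hc3; rewrite ltnNge => /negbTE ->; lia.
Qed.

Lemma close (T : finType) (lt : rel T) n x y :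
  strict_order lt -> ranked_of_rank lt [set: T] n ->
  (forall i, i < n -> iso_C6 lt (levels lt [set: T] i i.+1)) ->
  ~~ lt x y -> rank_in lt [set: T] y < rank_in lt [set: T] x + 2.
Proof.
move=> Hso Hrk Hc Hxy; rewrite ltnNge; apply/negP => H.
move/negP: Hxy; apply; apply: (far Hso Hrk Hc (k := rank_in lt [set: T] y - rank_in lt [set: T] x - 2)).
lia.
Qed.

Theorem lemma5p1 (T : finType) (lt : rel T) (Q : {set T}) (j : nat) :
  strict_order lt ->
  six_stack lt [set: T] ->
  tower_of_sections lt Q ->
  #|level lt Q j| = 3 ->
  exists i : nat, level lt Q j = level lt [set: T] i.
Proof.
move=> Hso [n [Hn1 Hrk Hc]] _ HA.
set A := level lt Q j in HA *.
have Hanti : forall x y, x \in A -> y \in A -> ~~ lt x y.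
  move=> x y; rewrite !inE => /andP[Hx /eqP Rx] /andP[Hy /eqP Ry].
  apply/negP => Hxy; have := rank_lt Hso Hx Hy Hxy; rewrite Rx Ry ltnn.
  by [].
have : 0 < #|A| by rewrite HA.
rewrite card_gt0 => /set0Pn[x Hx].
have : #|A :\ x| == 2 by move: HA; rewrite (cardsD1 x) Hx /=; lia.
case/cards2P=> y [z [Hyz EA']].
have EA : A = [set x; y; z] by rewrite -(setD1K Hx) EA' setUA.
have Hy : y \in A by rewrite EA !inE eqxx !orbT.
have Hz : z \in A by rewrite EA !inE eqxx !orbT.
have Hxy : x != y.
  have : y \in A :\ x by rewrite EA' !inE eqxx.
  by rewrite !inE eq_sym => /andP[].
have Hxz : x != z.
  have : z \in A :\ x by rewrite EA' !inE eqxx orbT.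
  by rewrite !inE eq_sym => /andP[].
have Hc' := close Hso Hrk Hc.
have c1 := Hc' _ _ (Hanti _ _ Hx Hy). have c2 := Hc' _ _ (Hanti _ _ Hy Hx).
have c3 := Hc' _ _ (Hanti _ _ Hx Hz). have c4 := Hc' _ _ (Hanti _ _ Hz Hx).
have c5 := Hc' _ _ (Hanti _ _ Hy Hz). have c6 := Hc' _ _ (Hanti _ _ Hz Hy).
have n1 := rank_le_n x Hso Hrk. have n2 := rank_le_n y Hso Hrk.
have n3 := rank_le_n z Hso Hrk.
pose m := minn (rank_in lt [set: T] x) (minn (rank_in lt [set: T] y) (rank_in lt [set: T] z)).
pose i := if m < n then m else n.-1.
have Hi : i < n by rewrite /i; case: ifP => //; lia.
have Hin : forall w, w \in A -> i <= rank_in lt [set: T] w <= i.+1.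
  move=> w; rewrite EA !inE => /orP[/orP[]|] /eqP ->; rewrite /i /m; case: ifP; lia.
have [f [injf HBf Hf]] := Hc i Hi.
have [L0 L1] := crown_level Hso HBf Hf.
have Hpre : forall w, w \in A -> exists2 a, w = f a & (rank_in lt [set: T] w == i + (3 <= a)).
  move=> w Hw; have : w \in levels lt [set: T] i i.+1 by rewrite inE in_setT Hin.
  rewrite HBf => /imsetP[a _ ->]; exists a => //.
  by rewrite (crown_rank Hso HBf Hf).
have [px Ex _] := Hpre x Hx.
have [py Ey _] := Hpre y Hy.
have [pz Ez _] := Hpre z Hz.
have Hant := c6_anti (x := px) (y := py) (z := pz).
have Hne : forall a b, f a != f b -> a != b.
  by move=> a b; apply: contra => /eqP ->.
have Hl : forall a b w1 w2, w1 = f a -> w2 = f b -> w1 \in A -> w2 \in A -> ~~ c6lt a b.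
  by move=> a b w1 w2 -> ->; rewrite -Hf; apply: Hanti.
move: Hant; rewrite Hne -?Ex -?Ey // Hne -?Ey -?Ez // Hne -?Ex -?Ez //.
rewrite (Hl _ _ _ _ Ex Ey) // (Hl _ _ _ _ Ey Ex) // (Hl _ _ _ _ Ex Ez) //.
rewrite (Hl _ _ _ _ Ez Ex) // (Hl _ _ _ _ Ey Ez) // (Hl _ _ _ _ Ez Ey) //.
move=> /(_ isT) /orP[/and3P[a1 a2 a3]|/and3P[a1 a2 a3]].
- exists i; apply/eqP; rewrite eqEcard; apply/andP; split.
    apply/subsetP => w Hw; rewrite L0.
    have : w \in [set x; y; z] by rewrite -EA.
    rewrite !inE => /orP[/orP[]|] /eqP ->;
      by rewrite ?Ex ?Ey ?Ez imset_f // inE.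
  rewrite L0; apply: leq_trans (leq_imset_card _ _) _; rewrite card_lo -HA; exact: leqnn.
- exists i.+1; apply/eqP; rewrite eqEcard; apply/andP; split.
    apply/subsetP => w Hw; rewrite L1.
    have : w \in [set x; y; z] by rewrite -EA.
    rewrite !inE => /orP[/orP[]|] /eqP ->;
      by rewrite ?Ex ?Ey ?Ez imset_f // inE.
  rewrite L1; apply: leq_trans (leq_imset_card _ _) _; rewrite card_hi -HA; exact: leqnn.
Qed.
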